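(* Let $(x_0^*,x^*,y^* )$ be a basic optimal solution to Problem (II) defined in the context, and let $S^*=\{i\in\mathcal N:x_i^*\ne0\}$. Then $S^*$ is an optimal solution to Problem (I) defined in the context.
   Context: Let $\mathcal N=\{1,\dots,N\}$, $\mathcal K=\{1,\dots,K\}$. Data: $\hat v_i>0$, $r_i\in[0,1]$, $a(i,k)\in[0,1]$, multipliers $\mu_k\ge0$, and $\varepsilon_i=(\sqrt N+1)\Psi/\sqrt{n_i}$ with positive integers $n_i$ and a constant $\Psi>0$. Problem (I): maximize over $S\subseteq\mathcal N$ the quantity $\sum_{i\in S}\Big[r_i\Big(\frac{\hat v_i}{1+\sum_{j\in S}\hat v_j}+\varepsilon_i\Big)-\sum_{k\in\mathcal K}a(i,k)\mu_k\Big(\frac{\hat v_i}{1+\sum_{j\in S}\hat v_j}-\varepsilon_i\Big)\Big]$. Problem (II): maximize over $(x_0,x,y)\in\mathbb R\times\mathbb R_+^N\times\mathbb R_+^{N\times N}$ the quantity $\sum_{i\in\mathcal N}\Big[r_i\Big((\hat v_i+\varepsilon_i)x_i+\varepsilon_i\sum_{j\in\mathcal N}\hat v_jy_{ij}\Big)-\sum_{k\in\mathcal K}a(i,k)\mu_k\Big((\hat v_i-\varepsilon_i)x_i-\varepsilon_i\sum_{j\in\mathcal N}\hat v_jy_{ij}\Big)\Big]$ subject to $x_0+\sum_i\hat v_ix_i=1$, $x_i\le x_0$ for all $i$, and $y_{ij}\le x_i$, $y_{ij}\le x_j$ for all $i,j$. *)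

(* Defs.v *)
From HB Require Import structures.
From mathcomp Require Import all_boot all_order all_algebra.
From mathcomp Require Import reals.
Set Implicit Arguments. Unset Strict Implicit. Unset Printing Implicit Defensive.
Import Order.TTheory GRing.Theory Num.Theory.
Local Open Scope ring_scope.

(* Data: N products indexed by 'I_N, K resources indexed by 'I_K,
   v = \hat v, r, a, mu, sample sizes n, constant Psi. *)

Definition eps (R : realType) (N : nat) (Psi : R) (n : 'I_N -> nat) (i : 'I_N) : R :=
  (Num.sqrt (N%:R) + 1) * Psi / Num.sqrt ((n i)%:R).

Definition objI (R : realType) (N K : nat) (v r : 'I_N -> R) (a : 'I_N -> 'I_K -> R)
  (mu : 'I_K -> R) (Psi : R) (n : 'I_N -> nat) (S : {set 'I_N}) : R :=
  \sum_(i in S)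
     (r i * (v i / (1 + \sum_(j in S) v j) + eps Psi n i)
      - \sum_(k < K) a i k * mu k * (v i / (1 + \sum_(j in S) v j) - eps Psi n i)).

Definition optimalI (R : realType) (N K : nat) (v r : 'I_N -> R) (a : 'I_N -> 'I_K -> R)
  (mu : 'I_K -> R) (Psi : R) (n : 'I_N -> nat) (S : {set 'I_N}) : Prop :=
  forall S' : {set 'I_N}, objI v r a mu Psi n S' <= objI v r a mu Psi n S.

Definition objII (R : realType) (N K : nat) (v r : 'I_N -> R) (a : 'I_N -> 'I_K -> R)
  (mu : 'I_K -> R) (Psi : R) (n : 'I_N -> nat)
  (x0 : R) (x : 'I_N -> R) (y : 'I_N -> 'I_N -> R) : R :=
  \sum_(i < N)
    (r i * ((v i + eps Psi n i) * x i + eps Psi n i * \sum_(j < N) v j * y i j)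
     - \sum_(k < K) a i k * mu k *
         ((v i - eps Psi n i) * x i - eps Psi n i * \sum_(j < N) v j * y i j)).

Definition feasII (R : realType) (N : nat) (v : 'I_N -> R)
  (x0 : R) (x : 'I_N -> R) (y : 'I_N -> 'I_N -> R) : Prop :=
  x0 + \sum_(i < N) v i * x i = 1 /\
  (forall i, 0 <= x i /\ x i <= x0) /\
  (forall i j, 0 <= y i j /\ y i j <= x i /\ y i j <= x j).

(* A basic feasible solution of Problem (II) = a vertex (extreme point)
   of its feasible polyhedron. *)
Definition basicII (R : realType) (N : nat) (v : 'I_N -> R)
  (x0 : R) (x : 'I_N -> R) (y : 'I_N -> 'I_N -> R) : Prop :=
  feasII v x0 x y /\
  forall (x0' : R) (x' : 'I_N -> R) (y' : 'I_N -> 'I_N -> R)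
         (x0'' : R) (x'' : 'I_N -> R) (y'' : 'I_N -> 'I_N -> R) (l : R),
    feasII v x0' x' y' -> feasII v x0'' x'' y'' -> 0 < l -> l < 1 ->
    x0 = l * x0' + (1 - l) * x0'' ->
    (forall i, x i = l * x' i + (1 - l) * x'' i) ->
    (forall i j, y i j = l * y' i j + (1 - l) * y'' i j) ->
    x0' = x0'' /\ (forall i, x' i = x'' i) /\ (forall i j, y' i j = y'' i j).

Definition optimalII (R : realType) (N K : nat) (v r : 'I_N -> R) (a : 'I_N -> 'I_K -> R)
  (mu : 'I_K -> R) (Psi : R) (n : 'I_N -> nat)
  (x0 : R) (x : 'I_N -> R) (y : 'I_N -> 'I_N -> R) : Prop :=
  feasII v x0 x y /\
  forall x0' x' y', feasII v x0' x' y' ->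
    objII v r a mu Psi n x0' x' y' <= objII v r a mu Psi n x0 x y.

(* Main.v *)
Require Import Defs.
From HB Require Import structures.
From mathcomp Require Import all_boot all_order all_algebra.
From mathcomp Require Import reals.
From mathcomp Require Import ring lra.
Set Implicit Arguments. Unset Strict Implicit.
Import Order.TTheory GRing.Theory Num.Theory.
Local Open Scope ring_scope.

Lemma sumS_ge0 (R : realType) (N : nat) (v : 'I_N -> R) (hv : forall i, 0 < v i) (S : pred 'I_N) :
  0 <= \sum_(j | S j) v j.
Proof. by apply: sumr_ge0 => i _; apply: ltW. Qed.

Lemma embed_feas (R : realType) (N : nat) (v : 'I_N -> R) (hv : forall i, 0 < v i) (S : {set 'I_N}) :
  feasII v (1 + \sum_(j in S) v j)^-1
    (fun i => if i \in S then (1 + \sum_(j in S) v j)^-1 else 0)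
    (fun i j => if (i \in S) && (j \in S) then (1 + \sum_(j in S) v j)^-1 else 0).
Proof.
have hs := sumS_ge0 hv (mem S).
set W := 1 + _.
have hW : 0 < W by rewrite /W; lra.
have hWi : 0 < W^-1 by rewrite invr_gt0.
split; last split.
- rewrite (eq_bigr (fun i => (if i \in S then v i else 0) * W^-1)); last first.
    by move=> i _; case: (i \in S); rewrite ?mulr0 ?mul0r.
  rewrite -mulr_suml -big_mkcond /= -/W.
  have : W - 1 = \sum_(j in S) v j by rewrite /W; lra.
  move=> <-.
  have hW0 : W != 0 by rewrite gt_eqF.
  by rewrite -[X in X + _]mul1r -mulrDl addrC subrK mulfV.
- move=> i; case: (i \in S); lra.
- move=> i j; case: (i \in S); case: (j \in S) => /=; lra.
Qed.

Lemma aux1 (R : realType) (w vv e : R) : w != 0 ->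
  (vv+e)*w^-1 + e*((w-1)*w^-1) = vv*w^-1 + e.
Proof. move=> hw. field. exact hw. Qed.
Lemma aux2 (R : realType) (w vv e : R) : w != 0 ->
  (vv-e)*w^-1 - e*((w-1)*w^-1) = vv*w^-1 - e.
Proof. move=> hw. field. exact hw. Qed.

Lemma embed_obj (R : realType) (N K : nat)
  (v r : 'I_N -> R) (a : 'I_N -> 'I_K -> R) (mu : 'I_K -> R)
  (n : 'I_N -> nat) (Psi : R) (hv : forall i, 0 < v i) (S : {set 'I_N}) :
  objII v r a mu Psi n (1 + \sum_(j in S) v j)^-1
    (fun i => if i \in S then (1 + \sum_(j in S) v j)^-1 else 0)
    (fun i j => if (i \in S) && (j \in S) then (1 + \sum_(j in S) v j)^-1 else 0)
  = objI v r a mu Psi n S.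
Proof.
have hs := sumS_ge0 hv (mem S).
rewrite /objII /objI.
set W := 1 + _.
have hW0 : W != 0 by rewrite /W; apply: lt0r_neq0; lra.
have hsum : \sum_(j < N) v j * (if j \in S then W^-1 else 0) = (W - 1) * W^-1.
  rewrite (eq_bigr (fun j => (if j \in S then v j else 0) * W^-1)); last first.
    by move=> j _; case: (j \in S); rewrite ?mulr0 ?mul0r.
  by rewrite -mulr_suml -big_mkcond /= /W addrAC subrr add0r.
rewrite [RHS]big_mkcond /=; apply: eq_bigr => i _.
case: (i \in S) => /=.
  by rewrite hsum aux1 // aux2.
have h0 : \sum_(j < N) v j * 0 = 0 :> R by rewrite big1 // => j _; rewrite mulr0.
rewrite h0 !mulr0 subrr big1 ?addr0 ?mulr0 ?subrr // => k _.
by rewrite !mulr0 ?subrr ?mulr0.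
Qed.

Lemma eps_ge0 (R : realType) (N : nat) (Psi : R) (n : 'I_N -> nat) i :
  0 < Psi -> 0 <= eps Psi n i.
Proof.
move=> hP; rewrite /eps; apply: divr_ge0; last exact: sqrtr_ge0.
apply: mulr_ge0; last exact: ltW.
by apply: addr_ge0 => //; apply: sqrtr_ge0.
Qed.

Lemma y_mono (R : realType) (N K : nat)
  (v r : 'I_N -> R) (a : 'I_N -> 'I_K -> R) (mu : 'I_K -> R)
  (n : 'I_N -> nat) (Psi : R)
  (hv : forall i, 0 < v i)
  (hr : forall i, 0 <= r i <= 1)
  (ha : forall i k, 0 <= a i k <= 1)
  (hmu : forall k, 0 <= mu k)
  (hPsi : 0 < Psi)
  (x0 : R) (x : 'I_N -> R) (y : 'I_N -> 'I_N -> R) (S : {set 'I_N}) :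
  feasII v x0 x y -> (forall i, x i = if i \in S then x0 else 0) ->
  objII v r a mu Psi n x0 x y <=
  objII v r a mu Psi n x0 x (fun i j => if (i \in S) && (j \in S) then x0 else 0).
Proof.
move=> [_ [hx hy]] hxS.
rewrite /objII; apply: ler_sum => i _.
have hs : \sum_(j < N) v j * y i j <=
          \sum_(j < N) v j * (if (i \in S) && (j \in S) then x0 else 0).
  apply: ler_sum => j _; apply: ler_wpM2l; first exact: ltW.
  have [h1 [h2 h3]] := hy i j.
  move: h2 h3; rewrite !hxS.
  by case: (i \in S); case: (j \in S).
have he := eps_ge0 n i hPsi.
have hri : 0 <= r i by case/andP: (hr i).
apply: lerB.
  apply: ler_wpM2l => //; rewrite lerD2l; exact: ler_wpM2l.
apply: ler_sum => k _; apply: ler_wpM2l.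
  by apply: mulr_ge0 => //; case/andP: (ha i k).
apply: lerB => //; exact: ler_wpM2l.
Qed.

Lemma fin_min (R : realType) (I : finType) (f : I -> R) :
  (forall i, 0 < f i) -> exists2 g, 0 < g & forall i, g <= f i.
Proof.
move=> hf.
have hs0 : 0 <= \sum_i (f i)^-1 by apply: sumr_ge0 => i _; rewrite invr_ge0 ltW.
exists (1 + \sum_i (f i)^-1)^-1; first by rewrite invr_gt0 (lt_le_trans ltr01) // lerDl.
move=> i.
have hs : (f i)^-1 <= 1 + \sum_j (f j)^-1.
  rewrite (bigD1 i) //=.
  have : 0 <= \sum_(j | j != i) (f j)^-1 by apply: sumr_ge0 => j _; rewrite invr_ge0 ltW.
  lra.
rewrite -[f i]invrK ler_pV2 ?inE ?posrE ?invr_gt0 //.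
  have hp : 0 < 1 + \sum_i (f i)^-1 by rewrite (lt_le_trans ltr01) // lerDl.
  by rewrite hp unitf_gt0.
by rewrite hf unitfE invr_eq0 gt_eqF.
Qed.

Lemma perturb (R : realType) (N : nat) (v : 'I_N -> R)
  (x0 : R) (x : 'I_N -> R) (y : 'I_N -> 'I_N -> R) (lam s d g : R) :
  feasII v x0 x y ->
  lam = 1 + \sum_(i | x i == x0) v i ->
  (forall i, x i != x0 -> g <= x0 - x i) ->
  (forall i j, y i j != x0 -> g <= x0 - y i j) ->
  0 < d -> 2 * d <= g -> 2 * d <= x0 -> -d <= s -> s <= d ->
  -1/2 <= s * lam -> s * lam <= 1/2 ->
  feasII v ((1 - s * lam) * x0 + s)
    (fun i => (1 - s * lam) * x i + (if x i == x0 then s else 0))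
    (fun i j => (1 - s * lam) * y i j + (if y i j == x0 then s else 0)).
Proof.
move=> [hL [hx hy]] hlam hgx hgy hd hdg hdx hs1 hs2 ht1 ht2.
split; last split.
- have -> : \sum_(i < N) v i * ((1 - s * lam) * x i + (if x i == x0 then s else 0))
     = (1 - s * lam) * \sum_(i < N) v i * x i + s * \sum_(i | x i == x0) v i.
    under eq_bigr => i _ do rewrite mulrDr.
    rewrite big_split /=; congr (_ + _).
      by rewrite mulr_sumr; apply: eq_bigr => i _; rewrite mulrCA.
    rewrite [in RHS]big_mkcond mulr_sumr /=; apply: eq_bigr => i _.
    by case: (x i == x0); rewrite ?mulr0 // mulrC.
  have hsum : \sum_(i < N) v i * x i = 1 - x0.
    by rewrite -hL addrAC subrr add0r.
  rewrite hsum.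
  have -> : \sum_(i | x i == x0) v i = lam - 1 by rewrite hlam addrAC subrr add0r.
  set t := s * lam.
  have -> : s * (lam - 1) = t - s by rewrite /t mulrBr mulr1.
  rewrite mulrBr mulr1.
  set u := (1 - t) * x0.
  lra.
- move=> i; have [h0 h1] := hx i.
  case: (eqVneq (x i) x0) => [->|hne] /=.
    split; last exact: lexx.
    nra.
  have := hgx i hne; nra.
- move=> i j; have [h0 [h1 h2]] := hy i j.
  have [hx0 hx1] := hx i; have [hx0' hx1'] := hx j.
  case: (eqVneq (y i j) x0) => [hyx|hne] /=.
    have hxi : x i = x0 by apply/eqP; rewrite eq_le hx1 -hyx h1.
    have hxj : x j = x0 by apply/eqP; rewrite eq_le hx1' -hyx h2.
    rewrite hyx hxi hxj eqxx; split; [nra | split; exact: lexx].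
  have hg := hgy i j hne.
  split; first nra.
  split.
    case: (eqVneq (x i) x0) => [hxi|hnei]; first (rewrite hxi in h1 *; nra).
    nra.
  case: (eqVneq (x j) x0) => [hxj|hnej]; first (rewrite hxj in h2 *; nra).
  nra.
Qed.

Lemma vertex (R : realType) (N : nat) (v : 'I_N -> R)
  (hv : forall i, 0 < v i)
  (x0 : R) (x : 'I_N -> R) (y : 'I_N -> 'I_N -> R) :
  basicII v x0 x y -> 0 < x0 /\ forall i, x i = if x i == x0 then x0 else 0.
Proof.
move=> [hf hb].
have hf' := hf; move: hf' => [hL [hx hy]].
have hx0 : 0 < x0.
  case: (ltrP 0 x0) => // hle.
  have hz : forall i, x i = 0.
    by move=> i; case: (hx i) => h1 h2; apply/eqP; rewrite eq_le h1 andbT (le_trans h2 hle).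
  move: hL; rewrite big1 ?addr0 => [h1|i _]; last by rewrite hz mulr0.
  by move: hle; rewrite h1 ler10.
split => //.
have [g1 hg1 hg1'] := @fin_min R _ (fun i => if x i == x0 then 1 else x0 - x i)
  ltac:(by move=> i /=; case: (eqVneq (x i) x0) => [_|hne] //; rewrite subr_gt0 lt_neqAle hne; case: (hx i)).
have [g2 hg2 hg2'] := @fin_min R _ (fun p : 'I_N * 'I_N => if y p.1 p.2 == x0 then 1 else x0 - y p.1 p.2)
  ltac:(by move=> [i j] /=; case: (eqVneq (y i j) x0) => [_|hne] //; rewrite subr_gt0 lt_neqAle hne;
         case: (hy i j) => _ [h1 _]; rewrite (le_trans h1) //; case: (hx i)).
have [g hg [hgg1 hgg2]] : exists2 g : R, 0 < g & g <= g1 /\ g <= g2.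
  by case: (lerP g1 g2) => h; [exists g1 | exists g2] => //; split => //; apply: ltW.
set lam := 1 + \sum_(i | x i == x0) v i.
have hlam : 1 <= lam by rewrite /lam lerDl; apply: sumr_ge0 => i _; apply: ltW.
have [d1 hd1 [hd1a hd1b]] : exists2 d1 : R, 0 < d1 & 2 * d1 <= g /\ 2 * d1 <= x0.
  by case: (lerP g x0) => h; [exists (g/2) | exists (x0/2)]; lra.
set e := (2 * lam)^-1.
have he : e * (2 * lam) = 1 by rewrite /e mulVf // gt_eqF //; lra.
have he0 : 0 < e by rewrite /e invr_gt0; lra.
have [d hd [hda hdb]] : exists2 d : R, 0 < d & d <= d1 /\ d <= e.
  by case: (lerP d1 e) => h; [exists d1 | exists e] => //; split => //; apply: ltW.
have hgx : forall i, x i != x0 -> g <= x0 - x i.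
  by move=> i hne; have := hg1' i; rewrite (negbTE hne) => h; apply: le_trans h.
have hgy : forall i j, y i j != x0 -> g <= x0 - y i j.
  by move=> i j hne; have := hg2' (i, j); rewrite /= (negbTE hne) => h; apply: le_trans h.
have hdl : d * lam <= 1/2 by nra.
have hP1 := @perturb R N v x0 x y lam d d g hf erefl hgx hgy hd
  ltac:(lra) ltac:(lra) ltac:(lra) ltac:(lra) ltac:(nra) ltac:(nra).
have hP2 := @perturb R N v x0 x y lam (-d) d g hf erefl hgx hgy hd
  ltac:(lra) ltac:(lra) ltac:(lra) ltac:(lra) ltac:(nra) ltac:(nra).
have [_ [hxx _]] := hb _ _ _ _ _ _ (1/2) hP1 hP2 ltac:(lra) ltac:(lra)
  ltac:(nra)
  ltac:(move=> i /=; case: (x i == x0); nra)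
  ltac:(move=> i j /=; case: (y i j == x0); nra).
move=> i; case: (eqVneq (x i) x0) => [-> //|hne].
have := hxx i; rewrite (negbTE hne) !addr0 => h.
have h2 : (2 * d * lam) * x i = 0 by nra.
move/eqP: h2; rewrite mulf_eq0 => /orP [|/eqP //].
by rewrite gt_eqF //; nra.
Qed.

From Stdlib Require Import FunctionalExtensionality.

Theorem theoremC1 (R : realType) (N K : nat)
  (v r : 'I_N -> R) (a : 'I_N -> 'I_K -> R) (mu : 'I_K -> R)
  (n : 'I_N -> nat) (Psi : R)
  (hv : forall i, 0 < v i)
  (hr : forall i, 0 <= r i <= 1)
  (ha : forall i k, 0 <= a i k <= 1)
  (hmu : forall k, 0 <= mu k)
  (hn : forall i, (0 < n i)%N)
  (hPsi : 0 < Psi)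
  (x0 : R) (x : 'I_N -> R) (y : 'I_N -> 'I_N -> R)
  (hbasic : basicII v x0 x y)
  (hopt : optimalII v r a mu Psi n x0 x y) :
  optimalI v r a mu Psi n [set i | x i != 0].
Proof.
set S := [set i | x i != 0].
have [hx0 hxv] := vertex hv hbasic.
have hf := hbasic.1.
have hxS : forall i, x i = if i \in S then x0 else 0.
  move=> i; rewrite inE; have := hxv i.
  by case: (eqVneq (x i) x0) => [->|_ ->]; [rewrite gt_eqF | rewrite eqxx].
have hs := sumS_ge0 hv (mem S).
have hW0 : 1 + \sum_(j in S) v j != 0 by apply: lt0r_neq0; lra.
have hW : x0 = (1 + \sum_(j in S) v j)^-1.
  apply: (mulIf hW0); rewrite mulVf //.
  have [hL _] := hf.
  rewrite -[RHS]hL mulrDr mulr1 mulr_sumr; congr (_ + _).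
  rewrite [RHS](eq_bigr (fun i => (if i \in S then x0 * v i else 0))); last first.
    by move=> i _; rewrite hxS; case: (i \in S); rewrite ?mulr0 // mulrC.
  by rewrite -big_mkcond.
move=> S'.
rewrite -(embed_obj r a mu n Psi hv S') -(embed_obj r a mu n Psi hv S).
apply: le_trans; first exact: (hopt.2 _ _ _ (embed_feas hv S')).
apply: le_trans; first exact: (@y_mono R N K v r a mu n Psi hv hr ha hmu hPsi x0 x y S hf hxS).
suff -> : x = (fun i => if i \in S then x0 else 0) by rewrite hW.
by apply: functional_extensionality.
Qed.
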